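(* There is a universal constant $C>0$ such that the following holds. For any integers $n\ge 2$, $k\ge 2$ and any $\varepsilon\in(0,1)$, there is a map $F:\{0,1\}^n\to\mathcal{Q}_s$ with $s\le C\log n\cdot\log(1/\varepsilon)$ such that: if each player $\ell\in[k]$, holding input $x_\ell\in\{0,1\}^n$, sends the quantum state $F(x_\ell)$ to the referee, then for any indices $i,j\in[k]$ and any strings $y,z\in\{0,1\}^n$ known to the referee (and not necessarily to the players), the referee can compute $\mathrm{MEQ}_{k,n}(i,j,y,z)$ with error probability at most $\varepsilon$, for every choice of inputs $x_1,\dots,x_k$.
   Context: $[k]=\{1,\dots,k\}$. For $s\ge1$, $\mathcal{Q}_s$ denotes the set of $s$-qubit pure quantum states (unit vectors in $\mathbb{C}^{2^s}$). There are $k$ players, player $\ell$ holding a private input $x_\ell\in\{0,1\}^n$, and a referee who does not know the inputs. The modified equality query is $\mathrm{MEQ}_{k,n}(i,j,y,z)=1$ if $x_i\oplus y=x_j\oplus z$ and $0$ otherwise, where $\oplus$ is bitwise XOR. ''The referee can compute the query with error at most $\varepsilon$'' means the referee has a quantum procedure (quantum operations and measurements, depending on $i,j,y,z$) acting on the received states whose output equals $\mathrm{MEQ}_{k,n}(i,j,y,z)$ with probability at least $1-\varepsilon$. The players share no randomness and no entanglement. *)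

(* Defs.v *)
From mathcomp Require Import all_boot all_algebra.
From mathcomp Require Import complex.
From mathcomp Require Import reals exp.
Set Implicit Arguments. Unset Strict Implicit. Unset Printing Implicit Defensive.
Import GRing.Theory Num.Theory.
Local Open Scope ring_scope.

Definition bits (n : nat) := {ffun 'I_n -> bool}.

Definition bxor n (a b : bits n) : bits n := [ffun t => xorb (a t) (b t)].

Definition MEQ k n (x : 'I_k -> bits n) (i j : 'I_k) (y z : bits n) : bool :=
  bxor (x i) y == bxor (x j) z.

Section Quantum.
Variable R : realType.
Local Notation C := (R[i]).

(* s-qubit pure states: unit vectors in C^(2^s) *)
Definition is_unit_vec d (v : 'cV[C]_d) : Prop :=
  \sum_(a < d) (v a 0)^* * v a 0 = 1.

(* basis of the joint Hilbert space of k registers of dimension d: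
   functions 'I_k -> 'I_d (i.e. the k-fold tensor product) *)
Definition joint_basis (k d : nat) := {ffun 'I_k -> 'I_d}.

Definition tensor_state k d (v : 'I_k -> 'cV[C]_d) : joint_basis k d -> C :=
  fun f => \prod_(l < k) v l (f l) 0.

Definition qform (T : finType) (M : T -> T -> C) (v : T -> C) : C :=
  \sum_(a : T) \sum_(b : T) (v a)^* * M a b * v b.

Definition psd (T : finType) (M : T -> T -> C) : Prop :=
  forall v : T -> C, 0 <= qform M v.

(* effect operator: 0 <= M <= I, i.e. {M, I - M} is a two-outcome POVM *)
Definition effect (T : finType) (M : T -> T -> C) : Prop :=
  psd M /\ psd (fun a b => (a == b)%:R - M a b).

(* probability of outcome "1" when measuring {M, I - M} on state v *)
Definition accept_prob (T : finType) (M : T -> T -> C) (v : T -> C) : C :=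
  qform M v.

End Quantum.

(* Main.v *)
Require Import Defs.
From mathcomp Require Import all_boot all_algebra.
From mathcomp Require Import complex.
From mathcomp Require Import reals exp.
From mathcomp Require Import order zify ring lra.
Set Implicit Arguments. Unset Strict Implicit. Unset Printing Implicit Defensive.
Import Order.TTheory GRing.Theory Num.Theory.

Section Comb.

Definition par n (x a : bits n) : bool := \big[addb/false]_(q < n) (x q && a q).
Definition bz n : bits n := [ffun _ => false].

Lemma parD n (x w a : bits n) : par (bxor x w) a = par x a (+) par w a.
Proof.
rewrite /par -big_split /=; apply: eq_bigr => q _.
by rewrite /bxor ffunE; case: (x q); case: (w q); case: (a q).
Qed.

Lemma par_flip n (x : bits n) p (a : bits n) : x p ->
  par x [ffun q => if q == p then ~~ a q else a q] = ~~ par x a.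
Proof.
move=> xp; rewrite /par (bigD1 p) //= [in RHS](bigD1 p) //= ffunE eqxx xp /=.
rewrite -addNb; congr addb.
by apply: eq_bigr => q /negbTE qp; rewrite ffunE qp.
Qed.

Lemma half_count n (x : bits n) : x != bz n ->
  (\sum_(a : bits n) (par x a : nat)).*2 = 2 ^ n.
Proof.
move=> xnz.
have [p xp] : exists p, x p.
  apply/existsP; apply: contraR xnz => /existsPn H.
  by apply/eqP/ffunP => q; rewrite ffunE; apply/negbTE/H.
pose fl (a : bits n) : bits n := [ffun q => if q == p then ~~ a q else a q].
have flK : involutive fl.
  by move=> a; apply/ffunP => q; rewrite !ffunE; case: (q == p) => //; rewrite negbK.
have E1 : \sum_(a : bits n) (par x a : nat) = \sum_(a : bits n) (~~ par x a : nat).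
  rewrite (reindex_inj (inv_inj flK)) /=; apply: eq_bigr => a _.
  by rewrite par_flip.
rewrite -addnn {2}E1 -big_split /=.
rewrite (eq_bigr (fun _ => 1)); last by move=> a _; case: (par x a).
by rewrite sum1_card card_ffun card_bool card_ord.
Qed.

Lemma sum3 n (P : pred (bits n)) : (\sum_(a : bits n) (P a : nat)).*2 = 2 ^ n ->
  \sum_(a : bits n) 3 ^ (P a : nat) = 2 ^ n.+1.
Proof.
move=> H.
rewrite (eq_bigr (fun a => 1 + (P a : nat).*2)); last by move=> a _; case: (P a).
rewrite big_split /= sum1_card card_ffun card_bool card_ord.
have -> : \sum_(a : bits n) (P a : nat).*2 = (\sum_(a : bits n) (P a : nat)).*2.
  by rewrite -mul2n big_distrr /=; apply: eq_bigr => a _; rewrite mul2n.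
by rewrite H expnS mul2n addnn.
Qed.

Lemma sumG3 n m (P : pred (bits n)) : (\sum_(a : bits n) (P a : nat)).*2 = 2 ^ n ->
  \sum_(G : {ffun 'I_m -> bits n}) 3 ^ (\sum_(c < m) (P (G c) : nat)) = (2 ^ n.+1) ^ m.
Proof.
move=> H.
rewrite (eq_bigr (fun G : {ffun 'I_m -> bits n} => \prod_(c < m) 3 ^ (P (G c) : nat)));
  last by move=> G _; rewrite expn_sum.
rewrite -(bigA_distr_bigA (fun (c : 'I_m) (a : bits n) => 3 ^ (P a : nat))) /=.
by rewrite (eq_bigr (fun _ => 2 ^ n.+1)) ?prod_nat_const ?card_ord // => c _; rewrite sum3.
Qed.

Lemma markov n m (P : pred (bits n)) T : (\sum_(a : bits n) (P a : nat)).*2 = 2 ^ n ->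
  (\sum_(G : {ffun 'I_m -> bits n}) (T < \sum_(c < m) (P (G c) : nat)) : nat) * 3 ^ T.+1
   <= (2 ^ n.+1) ^ m.
Proof.
move=> H; rewrite -(sumG3 m H) big_distrl /=; apply: leq_sum => G _.
case: ltnP => h; rewrite ?mul0n // mul1n; exact: leq_pexp2l.
Qed.

Lemma lexp_mono a b e : a <= b -> a ^ e <= b ^ e.
Proof. by move=> h; elim: e => // e IH; rewrite !expnS leq_mul. Qed.

Lemma num_ineq n M : 2 * n.+1 <= M -> 2 ^ n.+1 * 16 ^ M < 3 * 27 ^ M.
Proof.
move=> hM; rewrite -(subnKC hM) !expnD !expnM.
have h1 : 2 ^ n.+1 * ((16 ^ 2) ^ n.+1 * 16 ^ (M - 2 * n.+1))
   = (2 * 16 ^ 2) ^ n.+1 * 16 ^ (M - 2 * n.+1) by rewrite expnMn mulnA.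
rewrite h1; apply: (@leq_ltn_trans ((27 ^ 2) ^ n.+1 * 27 ^ (M - 2 * n.+1))).
  by apply: leq_mul; apply: lexp_mono.
rewrite -[X in X < _]mul1n ltn_pmul2r //; rewrite muln_gt0 !expn_gt0 //.
Qed.

Definition wt n m (x : bits n) (G : {ffun 'I_m -> bits n}) : nat :=
  \sum_(c < m) (par x (G c) : nat).

Lemma code_exists n M : 2 * n.+1 <= M ->
  exists G : {ffun 'I_(4 * M) -> bits n},
    forall x, x != bz n -> M <= wt x G <= 3 * M.
Proof.
move=> hM; set m := 4 * M.
pose bad (G : {ffun 'I_m -> bits n}) x :=
  (3 * M < wt x G) || (3 * M < \sum_(c < m) (~~ par x (G c) : nat)).
have wtc : forall (G : {ffun 'I_m -> bits n}) (x : bits n), wt x G + \sum_(c < m) (~~ par x (G c) : nat) = m.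
  move=> G x; rewrite /wt -big_split /= (eq_bigr (fun _ => 1)); last by move=> c _; case: par.
  by rewrite sum1_card card_ord.
have good : forall G x, ~~ bad G x -> M <= wt x G <= 3 * M.
  move=> G x; rewrite /bad negb_or -!leqNgt => /andP[h1 h2]; rewrite h1 andbT.
  move: h2 (wtc G x); set S := \sum_(c < m) _; rewrite /m in S *; lia.
suff /existsP [G /forallP HG] : [exists G, [forall x, (x != bz n) ==> ~~ bad G x]].
  by exists G => x xz; apply: good; move: (HG x); rewrite xz.
apply: contraT => /existsPn Hall.
have Hb : forall G, 1 <= \sum_(x : bits n | x != bz n) (bad G x : nat).
  move=> G; have := Hall G; move/forallPn => [x]; rewrite negb_imply negbK => /andP[xz bx].
  by rewrite (bigD1 x) //= bx.
have S1 : #|{ffun 'I_m -> bits n}| <= \sum_(x : bits n | x != bz n)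
     \sum_(G : {ffun 'I_m -> bits n}) (bad G x : nat).
  rewrite exchange_big /= -sum1_card; exact: leq_sum.
have S2 : forall x, x != bz n ->
    (\sum_(G : {ffun 'I_m -> bits n}) (bad G x : nat)) * 3 ^ (3 * M).+1
      <= 2 * (2 ^ n.+1) ^ m.
  move=> x xz; apply: (@leq_trans ((\sum_(G : {ffun 'I_m -> bits n}) ((3 * M < wt x G) : nat) +
       \sum_(G : {ffun 'I_m -> bits n}) ((3 * M < \sum_(c < m) (~~ par x (G c) : nat)) : nat)) * 3 ^ (3 * M).+1)).
    rewrite leq_mul2r -big_split /=; apply/orP; right; apply: leq_sum => G _.
    by rewrite /bad; case: (_ < _); case: (_ < _).
  rewrite mulnDl mul2n -addnn; apply: leq_add.
    exact: (markov (P := par x) m (3 * M) (half_count xz)).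
  apply: (markov (P := fun a => ~~ par x a) m (3 * M)).
  have := half_count xz.
  have E : \sum_(a : bits n) (par x a : nat) + \sum_(a : bits n) (~~ par x a : nat) = 2 ^ n.
    rewrite -big_split /= (eq_bigr (fun _ => 1)); last by move=> a _; case: par.
    by rewrite sum1_card card_ffun card_bool card_ord.
  move: E; lia.
have S3 : #|{ffun 'I_m -> bits n}| * 3 ^ (3 * M).+1 <= 2 ^ n * (2 * (2 ^ n.+1) ^ m).
  apply: (leq_trans (leq_mul S1 (leqnn _))); rewrite big_distrl /=.
  apply: (@leq_trans (\sum_(x : bits n | x != bz n) 2 * (2 ^ n.+1) ^ m)).
    by apply: leq_sum => x xz; apply: S2.
  rewrite (big_mkcond) /=; apply: (@leq_trans (\sum_(x : bits n) 2 * (2 ^ n.+1) ^ m)).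
    by apply: leq_sum => x _; case: ifP.
  by rewrite sum_nat_const card_ffun card_bool card_ord.
move: S3; rewrite card_ffun card_ffun card_bool !card_ord.
rewrite /m -!expnM expnS.
have -> : (2 ^ (n * (4 * M)) * (3 * 3 ^ (3 * M)))
   = 2 ^ (n * (4 * M)) * (3 * 27 ^ M) by rewrite (expnM 3 3 M).
have -> : 2 ^ n * (2 * 2 ^ (n.+1 * (4 * M))) = 2 ^ (n * (4 * M)) * (2 ^ n.+1 * 16 ^ M).
  have h16 : 16 ^ M = 2 ^ (4 * M) by rewrite expnM.
  rewrite h16 -expnS -!expnD; congr (2 ^ _); nia.
rewrite leq_pmul2l ?expn_gt0 // leqNgt; by rewrite (num_ineq hM).
Qed.

End Comb.

Local Open Scope ring_scope.

Section LA.
Variable R : realType.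
Local Open Scope complex_scope.
Local Notation cj := (@Num.conj _).

Lemma cr (x : R) : cj (x%:C) = x%:C :> R[i].
Proof. exact: conjc_real. Qed.

Lemma sum_deltal (T : finType) (a : T) (F : T -> R) :
  \sum_b ((a == b)%:R * F b) = F a.
Proof.
rewrite (bigD1 a) //= eqxx mul1r big1 ?addr0 // => b /negbTE.
by rewrite eq_sym => ->; rewrite mul0r.
Qed.

Lemma sum_deltar (T : finType) (a : T) (F : T -> R) :
  \sum_b (F b * (b == a)%:R) = F a.
Proof.
rewrite -[RHS](sum_deltal a); apply: eq_bigr => b _; by rewrite mulrC eq_sym.
Qed.

Lemma psd_ext (T : finType) (M1 M2 : T -> T -> R[i]) :
  (forall a b, M1 a b = M2 a b) -> psd M1 -> psd M2.
Proof.
move=> E P v; rewrite /qform.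
under eq_bigr => a _ do under eq_bigr => b _ do rewrite -E.
exact: P.
Qed.

Lemma sumsq_ge0 (T : finType) (u : T -> R[i]) : 0 <= \sum_b cj (u b) * u b.
Proof. by apply: sumr_ge0 => b _; rewrite mulrC mul_conjC_ge0. Qed.

Lemma proj_psd (T : finType) (M : T -> T -> R) :
  (forall a b, M a b = M b a) ->
  (forall a c, \sum_b M a b * M b c = M a c) ->
  psd (fun a b => (M a b)%:C).
Proof.
move=> Ms Mi v; rewrite /qform.
pose u b := \sum_c (M b c)%:C * v c.
have uE a : u a = \sum_b (M a b)%:C * u b.
  rewrite /u; under [RHS]eq_bigr => b _ do rewrite big_distrr /=.
  rewrite exchange_big /=; apply: eq_bigr => c _.
  rewrite -(Mi a c) rmorph_sum big_distrl /=; apply: eq_bigr => b _.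
  by rewrite rmorphM mulrA.
have -> : \sum_a \sum_b cj (v a) * (M a b)%:C * v b = \sum_a cj (v a) * u a.
  by apply: eq_bigr => a _; rewrite /u big_distrr; apply: eq_bigr => b _; exact/esym/mulrA.
under eq_bigr => a _ do rewrite uE big_distrr /=.
rewrite exchange_big /=.
have -> : \sum_b \sum_a cj (v a) * ((M a b)%:C * u b) = \sum_b cj (u b) * u b.
  apply: eq_bigr => b _; rewrite /u rmorph_sum big_distrl /=; apply: eq_bigr => a _.
  by rewrite rmorphM /= cr Ms mulrCA mulrA.
exact: sumsq_ge0.
Qed.

Lemma proj_effect (T : finType) (M : T -> T -> R) :
  (forall a b, M a b = M b a) ->
  (forall a c, \sum_b M a b * M b c = M a c) ->
  effect (fun a b => (M a b)%:C).
Proof.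
move=> Ms Mi; split; first exact: proj_psd.
apply: (@psd_ext _ (fun a b => ((a == b)%:R - M a b)%:C)).
  by move=> a b; rewrite rmorphB rmorph_nat.
apply: proj_psd.
  by move=> a b; rewrite Ms eq_sym.
move=> a c.
under eq_bigr => b _ do rewrite mulrBl !mulrBr.
rewrite !big_split /= !sumrN sum_deltal sum_deltal.
rewrite sumrB sum_deltar Mi subrr subr0.
done.
Qed.

Lemma scal_psd (T : finType) (d : R) : 0 <= d -> psd (fun a b : T => ((a == b)%:R * d)%:C).
Proof.
move=> d0 v; rewrite /qform.
have -> : \sum_a \sum_b cj (v a) * ((a == b)%:R * d)%:C * v b
   = \sum_a d%:C * (cj (v a) * v a).
  apply: eq_bigr => a _.
  rewrite (bigD1 a) //= eqxx mul1r big1 ?addr0; first by rewrite mulrCA mulrA.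
  by move=> b /negbTE; rewrite eq_sym => ->; rewrite mul0r rmorph0 mulr0 mul0r.
rewrite -big_distrr /=; apply: mulr_ge0; first by rewrite ler0c.
exact: sumsq_ge0.
Qed.

Lemma scal_effect (T : finType) (c : R) : 0 <= c <= 1 ->
  effect (fun a b : T => ((a == b)%:R * c)%:C).
Proof.
move=> /andP[c0 c1].
split; first exact: scal_psd.
apply: (@psd_ext _ (fun a b => ((a == b)%:R * (1 - c))%:C)); last first.
  by apply: scal_psd; rewrite subr_ge0.
by move=> a b; rewrite mulrBr mulr1 rmorphB /= rmorph_nat.
Qed.

End LA.


Section Joint.
Variable R : realType.
Variables (T : finType) (k : nat) (i j : 'I_k).
Hypothesis hij : i != j.

Lemma sum_deltal' (a : T) (F : T -> R) :
  \sum_b ((a == b)%:R * F b) = F a.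
Proof.
rewrite (bigD1 a) //= eqxx mul1r big1 ?addr0 // => b /negbTE.
by rewrite eq_sym => ->; rewrite mul0r.
Qed.

Lemma sum_delta1 (a : T) : \sum_c ((c == a)%:R : R) = 1.
Proof.
rewrite (bigD1 a) //= eqxx big1 ?addr0 // => b /negbTE ->; done.
Qed.

Definition Pn (l : 'I_k) := (l != i) && (l != j).

Lemma prod_split (F : 'I_k -> R) :
  \prod_l F l = F i * F j * \prod_(l | Pn l) F l.
Proof.
rewrite (bigD1 i) //= (bigD1 j) 1?eq_sym //= mulrA; congr (_ * _).
Qed.

Lemma L1 (a b : T) (F : 'I_k -> T -> R) :
  \sum_(h : {ffun 'I_k -> T}) (h i == a)%:R * ((h j == b)%:R * \prod_(l | Pn l) F l (h l))
  = \prod_(l | Pn l) \sum_c F l c.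
Proof.
pose G l c := if l == i then (c == a)%:R else if l == j then (c == b)%:R else F l c.
have E1 : forall h : {ffun 'I_k -> T},
   (h i == a)%:R * ((h j == b)%:R * \prod_(l | Pn l) F l (h l)) = \prod_l G l (h l).
  have hji : j != i by rewrite eq_sym.
  move=> h; rewrite prod_split /G eqxx (negbTE hji) eqxx mulrA; congr (_ * _).
  by apply: eq_bigr => l /andP[/negbTE -> /negbTE ->].
rewrite (eq_bigr _ (fun h _ => E1 h)) -(bigA_distr_bigA (fun l c => G l c)) /=.
have hji : j != i by rewrite eq_sym.
rewrite prod_split /G eqxx (negbTE hji) eqxx !sum_delta1 !mul1r.
by apply: eq_bigr => l /andP[/negbTE -> /negbTE ->].
Qed.
Lemma factor (Y : T -> T -> R) (F : 'I_k -> T -> R) :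
  \sum_(h : {ffun 'I_k -> T}) Y (h i) (h j) * \prod_(l | Pn l) F l (h l)
  = \sum_a \sum_b Y a b * \prod_(l | Pn l) \sum_c F l c.
Proof.
have E : forall h : {ffun 'I_k -> T}, Y (h i) (h j) * \prod_(l | Pn l) F l (h l)
  = \sum_a \sum_b Y a b * ((h i == a)%:R * ((h j == b)%:R * \prod_(l | Pn l) F l (h l))).
  move=> h.
  transitivity (\sum_a (h i == a)%:R * \sum_b (h j == b)%:R *
      (Y a b * \prod_(l | Pn l) F l (h l))).
    by rewrite sum_deltal' sum_deltal'.
  apply: eq_bigr => a _; rewrite big_distrr; apply: eq_bigr => b _ /=; ring.
rewrite (eq_bigr _ (fun h _ => E h)) exchange_big /=.
apply: eq_bigr => a _; rewrite exchange_big /=; apply: eq_bigr => b _.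
by rewrite -big_distrr /= L1.
Qed.

Definition JM (K : T -> T -> T -> T -> R) (f g : {ffun 'I_k -> T}) : R :=
  (\prod_(l | Pn l) ((f l == g l)%:R : R)) * K (f i) (f j) (g i) (g j).

Lemma JM_sym K : (forall a b a' b', K a b a' b' = K a' b' a b) ->
  forall f g, JM K f g = JM K g f.
Proof.
move=> Ks f g; rewrite /JM Ks; congr (_ * _); apply: eq_bigr => l _; by rewrite eq_sym.
Qed.

Lemma JM_idem K :
  (forall a b a' b', \sum_x \sum_y K a b x y * K x y a' b' = K a b a' b') ->
  forall f g, \sum_h JM K f h * JM K h g = JM K f g.
Proof.
move=> Ki f g.
transitivity (\sum_(h : {ffun 'I_k -> T}) (K (f i) (f j) (h i) (h j) * K (h i) (h j) (g i) (g j))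
   * \prod_(l | Pn l) (((f l == h l)%:R : R) * (h l == g l)%:R)).
  apply: eq_bigr => h _; rewrite /JM big_split /=; ring.
rewrite (factor (fun a b => K (f i) (f j) a b * K a b (g i) (g j))
   (fun l c => ((f l == c)%:R : R) * (c == g l)%:R)).
rewrite /JM -Ki mulrC big_distrl /=; apply: eq_bigr => a _; rewrite big_distrl /=.
apply: eq_bigr => b _; congr (_ * _).
by apply: eq_bigr => l _; rewrite sum_deltal'.
Qed.

Lemma JM_qform K (v : 'I_k -> T -> R) :
  (forall l, \sum_c v l c * v l c = 1) ->
  \sum_(f : {ffun 'I_k -> T}) \sum_(g : {ffun 'I_k -> T})
     (\prod_l v l (f l)) * JM K f g * (\prod_l v l (g l))
  = \sum_a \sum_b \sum_a' \sum_b' v i a * v j b * K a b a' b' * v i a' * v j b'.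
Proof.
move=> vn.
have inner : forall f : {ffun 'I_k -> T},
  \sum_(g : {ffun 'I_k -> T}) JM K f g * (\prod_l v l (g l))
  = (\sum_a' \sum_b' K (f i) (f j) a' b' * v i a' * v j b') * \prod_(l | Pn l) v l (f l).
  move=> f.
  transitivity (\sum_(g : {ffun 'I_k -> T}) (K (f i) (f j) (g i) (g j) * v i (g i) * v j (g j))
     * \prod_(l | Pn l) (((f l == g l)%:R : R) * v l (g l))).
    apply: eq_bigr => g _; rewrite /JM prod_split big_split /=; ring.
  rewrite (factor (fun a b => K (f i) (f j) a b * v i a * v j b)
     (fun l c => ((f l == c)%:R : R) * v l c)).
  rewrite big_distrl /=; apply: eq_bigr => a _; rewrite big_distrl /=.
  apply: eq_bigr => b _; congr (_ * _).
  by apply: eq_bigr => l _; rewrite sum_deltal'.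
transitivity (\sum_(f : {ffun 'I_k -> T}) (v i (f i) * v j (f j) *
   (\sum_a' \sum_b' K (f i) (f j) a' b' * v i a' * v j b'))
   * \prod_(l | Pn l) (v l (f l) * v l (f l))).
  apply: eq_bigr => f _; rewrite (eq_bigr (fun g => \prod_l v l (f l) * (JM K f g * \prod_l v l (g l)))); last by move=> g _; rewrite mulrA.
  rewrite -big_distrr /= inner prod_split big_split /=; ring.
rewrite (factor (fun a b => v i a * v j b *
   (\sum_a' \sum_b' K a b a' b' * v i a' * v j b'))
   (fun l c => v l c * v l c)).
apply: eq_bigr => a _; apply: eq_bigr => b _.
rewrite (eq_bigr (fun _ => 1)) ?big1_eq ?mulr1; last by move=> l _; rewrite vn.
rewrite big_distrr; apply: eq_bigr => a' _; rewrite big_distrr; apply: eq_bigr => b' _ /=.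
ring.
Qed.

End Joint.


Section Kern.
Variable R : realType.
Variables (m t : nat) (T : finType) (phi : T -> {ffun 'I_t -> 'I_m}).
Hypothesis hphi : bijective phi.

Lemma reidx (F : {ffun 'I_t -> 'I_m} -> R) : \sum_(a : T) F (phi a) = \sum_u F u.
Proof. by rewrite (reindex phi) //; apply: onW_bij. Qed.

Lemma distr1 (H : 'I_t -> 'I_m -> R) :
  \sum_(u : {ffun 'I_t -> 'I_m}) \prod_q H q (u q) = \prod_q \sum_x H q x.
Proof. by rewrite bigA_distr_bigA. Qed.

Lemma sdl (m' : nat) (a : 'I_m') (F : 'I_m' -> R) : \sum_b ((a == b)%:R * F b) = F a.
Proof.
rewrite (bigD1 a) //= eqxx mul1r big1 ?addr0 // => b /negbTE.
by rewrite eq_sym => ->; rewrite mul0r.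
Qed.

Lemma distr1' (H : 'I_t -> 'I_m -> R) :
  \sum_(x : T) \prod_q H q (phi x q) = \prod_q \sum_c H q c.
Proof. by rewrite (reidx (fun u => \prod_q H q (u q))) distr1. Qed.

Lemma distr2 (H : 'I_t -> 'I_m -> 'I_m -> R) :
  \sum_(x : T) \sum_(y : T) \prod_q H q (phi x q) (phi y q)
  = \prod_q \sum_c \sum_d H q c d.
Proof.
rewrite (eq_bigr (fun x => \prod_q \sum_d H q (phi x q) d)); last first.
  by move=> x _; rewrite (distr1' (fun q d => H q (phi x q) d)).
by rewrite (distr1' (fun q c => \sum_d H q c d)).
Qed.

Lemma distr4 (H : 'I_t -> 'I_m -> 'I_m -> 'I_m -> 'I_m -> R) :
  \sum_(x : T) \sum_(y : T) \sum_(x' : T) \sum_(y' : T)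
     \prod_q H q (phi x q) (phi y q) (phi x' q) (phi y' q)
  = \prod_q \sum_c \sum_d \sum_c' \sum_d' H q c d c' d'.
Proof.
rewrite (eq_bigr (fun x => \sum_(y : T) \prod_q \sum_c' \sum_d' H q (phi x q) (phi y q) c' d'));
  last first.
  move=> x _; apply: eq_bigr => y _.
  by rewrite (distr2 (fun q c' d' => H q (phi x q) (phi y q) c' d')).
by rewrite (distr2 (fun q c d => \sum_c' \sum_d' H q c d c' d')).
Qed.

Definition kap (x y x' y' : 'I_m) : R :=
  (((x == x')%:R * (y == y')%:R) + ((x == y')%:R * (y == x')%:R)) / 2.

Lemma kap_sym x y x' y' : kap x y x' y' = kap x' y' x y.
Proof. by rewrite /kap [x == x']eq_sym [y == y']eq_sym [x == y']eq_sym [y == x']eq_sym; ring. Qed.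

Lemma kap_swap x y x' y' : kap y x x' y' = kap x y x' y'.
Proof. rewrite /kap; ring. Qed.

Lemma kap_sum x y (G : 'I_m -> 'I_m -> R) :
  \sum_x'' \sum_y'' kap x y x'' y'' * G x'' y'' = (G x y + G y x) / 2.
Proof.
transitivity (\sum_x'' ((x == x'')%:R * (G x'' y / 2) + (y == x'')%:R * (G x'' x / 2))).
  apply: eq_bigr => x'' _.
  transitivity (\sum_y'' ((y == y'')%:R * ((x == x'')%:R * G x'' y'' / 2)
     + (x == y'')%:R * ((y == x'')%:R * G x'' y'' / 2))).
    by apply: eq_bigr => y'' _; rewrite /kap; ring.
  rewrite big_split /= !sdl; ring.
by rewrite big_split /= !sdl; ring.
Qed.

Lemma kap_idem x y x' y' :
  \sum_x'' \sum_y'' kap x y x'' y'' * kap x'' y'' x' y' = kap x y x' y'.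
Proof.
by rewrite (kap_sum x y (fun a b => kap a b x' y')) (kap_swap x y) mulrDl -splitr.
Qed.

Lemma kap_form (hu hv : 'I_m -> R) :
  \sum_x \sum_y \sum_x' \sum_y' hu x * hv y * kap x y x' y' * hu x' * hv y'
  = ((\sum_x hu x * hu x) * (\sum_y hv y * hv y) + (\sum_x hu x * hv x) ^+ 2) / 2.
Proof.
transitivity (\sum_x \sum_y hu x * hv y * ((hu x * hv y + hu y * hv x) / 2)).
  apply: eq_bigr => x _; apply: eq_bigr => y _.
  rewrite -(kap_sum x y (fun a b => hu a * hv b)) big_distrr /=; apply: eq_bigr => x' _.
  rewrite big_distrr /=; apply: eq_bigr => y' _; ring.
have e1 : (\sum_x hu x * hu x) * (\sum_y hv y * hv y)
    = \sum_x \sum_y hu x * hu x * (hv y * hv y).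
  by rewrite big_distrl /=; apply: eq_bigr => x _; rewrite big_distrr.
have e2 : (\sum_x hu x * hv x) ^+ 2 = \sum_x \sum_y hu x * hv x * (hu y * hv y).
  by rewrite expr2 big_distrl /=; apply: eq_bigr => x _; rewrite big_distrr.
rewrite e1 e2 -big_split big_distrl /=; apply: eq_bigr => x _.
rewrite -big_split big_distrl /=; apply: eq_bigr => y _; ring.
Qed.

Definition Fr (h : 'I_m -> R) (a : T) : R := \prod_q h (phi a q).

Lemma Fr_norm (h : 'I_m -> R) :
  \sum_a Fr h a * Fr h a = (\sum_c h c * h c) ^+ t.
Proof.
rewrite (reidx (fun u => \prod_q h (u q) * \prod_q h (u q))).
under eq_bigr => u _ do rewrite -big_split /=.
by rewrite (distr1 (fun q c => h c * h c)) prodr_const card_ord.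
Qed.

Definition Kr (sy sz : 'I_m -> R) (a b a' b' : T) : R :=
  Fr sy a * Fr sz b * Fr sy a' * Fr sz b' *
  \prod_q kap (phi a q) (phi b q) (phi a' q) (phi b' q).

Lemma Kr_sym sy sz a b a' b' : Kr sy sz a b a' b' = Kr sy sz a' b' a b.
Proof.
rewrite /Kr; under eq_bigr => q _ do rewrite kap_sym. ring.
Qed.

Lemma Fr_sq (s : 'I_m -> R) : (forall c, s c * s c = 1) -> forall a, Fr s a * Fr s a = 1.
Proof.
move=> hs a; rewrite /Fr -big_split /=; apply: big1 => q _; exact: hs.
Qed.

Lemma Kr_idem sy sz : (forall c, sy c * sy c = 1) -> (forall c, sz c * sz c = 1) ->
  forall a b a' b', \sum_x \sum_y Kr sy sz a b x y * Kr sy sz x y a' b' = Kr sy sz a b a' b'.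
Proof.
move=> hy hz a b a' b'.
transitivity (Fr sy a * Fr sz b * Fr sy a' * Fr sz b' *
  \sum_x \sum_y \prod_q (kap (phi a q) (phi b q) (phi x q) (phi y q) *
                          kap (phi x q) (phi y q) (phi a' q) (phi b' q))).
  rewrite big_distrr /=; apply: eq_bigr => x _; rewrite big_distrr /=; apply: eq_bigr => y _.
  rewrite big_split /= /Kr.
  have h1 := Fr_sq hy x; have h2 := Fr_sq hz y.
  transitivity (Fr sy a * Fr sz b * Fr sy a' * Fr sz b' *
     (\prod_q kap (phi a q) (phi b q) (phi x q) (phi y q) *
      \prod_q kap (phi x q) (phi y q) (phi a' q) (phi b' q)) * (Fr sy x * Fr sy x) * (Fr sz y * Fr sz y)).
    ring.
  by rewrite h1 h2 !mulr1.
rewrite /Kr; congr (_ * _).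
rewrite (distr2 (fun q c d => kap (phi a q) (phi b q) c d * kap c d (phi a' q) (phi b' q))).
apply: eq_bigr => q _; exact: kap_idem.
Qed.

Lemma Kr_form sy sz hu hv :
  \sum_a \sum_b \sum_a' \sum_b' Fr hu a * Fr hv b * Kr sy sz a b a' b' * Fr hu a' * Fr hv b'
  = (((\sum_x (hu x * sy x) ^+ 2) * (\sum_y (hv y * sz y) ^+ 2)
      + (\sum_x (hu x * sy x) * (hv x * sz x)) ^+ 2) / 2) ^+ t.
Proof.
pose gu c := hu c * sy c; pose gv c := hv c * sz c.
have FrM (h1 h2 : 'I_m -> R) a : Fr h1 a * Fr h2 a = Fr (fun c => h1 c * h2 c) a.
  by rewrite /Fr -big_split.
transitivity (\sum_a \sum_b \sum_a' \sum_b' \prod_q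
   (gu (phi a q) * gv (phi b q) * kap (phi a q) (phi b q) (phi a' q) (phi b' q)
    * gu (phi a' q) * gv (phi b' q))).
  apply: eq_bigr => a _; apply: eq_bigr => b _; apply: eq_bigr => a' _; apply: eq_bigr => b' _.
  rewrite /Kr.
  transitivity ((Fr hu a * Fr sy a) * (Fr hv b * Fr sz b) *
     \prod_q kap (phi a q) (phi b q) (phi a' q) (phi b' q) * (Fr hu a' * Fr sy a') *
     (Fr hv b' * Fr sz b')); first ring.
  rewrite !FrM /Fr -!big_split /=; done.
rewrite (distr4 (fun q c d c' d' => gu c * gv d * kap c d c' d' * gu c' * gv d')).
rewrite -[in RHS](card_ord t) -prodr_const; apply: eq_bigr => q _.
rewrite kap_form /gu /gv; congr ((_ * _ + _) / 2); apply: eq_bigr => x _; by rewrite expr2.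
Qed.

End Kern.


Section Inst.
Variable R : realType.
Variables (n r t M : nat) (G : {ffun 'I_(2 ^ r) -> bits n}).
Hypothesis hm : (2 ^ r = 4 * M)%N.
Hypothesis hG : forall x, x != bz n -> (M <= wt x G <= 3 * M)%N.

Local Notation m := (2 ^ r)%N.
Local Notation d := (2 ^ (r * t))%N.
Local Notation Dg := {ffun 'I_t -> 'I_m}.

Definition xi (x : bits n) (c : 'I_m) : R := (-1) ^+ par x (G c).
Definition hh (x : bits n) (c : 'I_m) : R := xi x c / Num.sqrt (m%:R).

Lemma cardE : d = #|Dg|.
Proof. by rewrite card_ffun !card_ord expnM. Qed.

Definition phi (a : 'I_d) : Dg := enum_val (cast_ord cardE a).
Definition phinv (u : Dg) : 'I_d := cast_ord (esym cardE) (enum_rank u).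

Lemma phi_bij : bijective phi.
Proof.
exists phinv.
  by move=> a; rewrite /phi /phinv enum_valK cast_ordK.
by move=> u; rewrite /phi /phinv cast_ordKV enum_rankK.
Qed.

Definition FF (x : bits n) : 'cV[R[i]]_d := \col_(a < d) ((Fr phi (hh x) a)%:C)%C.

Lemma xi_sq x c : xi x c * xi x c = 1.
Proof. by rewrite /xi; case: par; rewrite ?mulr1 // mulrNN mulr1. Qed.

Lemma xi_mul x w c : xi x c * xi w c = xi (bxor x w) c.
Proof. by rewrite /xi parD signr_addb. Qed.

Lemma m_pos : (0 : R) < m%:R.
Proof. by rewrite ltr0n expn_gt0. Qed.

Lemma sqrt_sq : Num.sqrt (m%:R : R) * Num.sqrt (m%:R) = m%:R.
Proof. by rewrite -expr2 sqr_sqrtr // ltW // m_pos. Qed.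

Lemma hh_norm x : \sum_c hh x c * hh x c = 1.
Proof.
have hs : Num.sqrt (m%:R : R) != 0 by apply: lt0r_neq0; rewrite sqrtr_gt0 m_pos.
rewrite (eq_bigr (fun _ => (m%:R)^-1)); last first.
  move=> c _; rewrite /hh mulrACA xi_sq mul1r -invfM sqrt_sq //.
rewrite sumr_const card_ord -[LHS]mulr_natr mulVf //; exact: lt0r_neq0 m_pos.
Qed.

Lemma hh_xi x y c : hh x c * xi y c = hh (bxor x y) c.
Proof. by rewrite /hh mulrAC xi_mul. Qed.

Lemma hh_inner u v : \sum_c hh u c * hh v c = (\sum_c xi (bxor u v) c) / m%:R.
Proof.
rewrite big_distrl /=; apply: eq_bigr => c _.
rewrite /hh mulrACA xi_mul -invfM sqrt_sq //.
Qed.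

Lemma sum_xi w : \sum_c xi w c = m%:R - 2 * (wt w G)%:R.
Proof.
rewrite /wt natr_sum big_distrr /=.
have -> : (m%:R : R) = \sum_(c < m) 1 by rewrite sumr_const card_ord.
rewrite -sumrB.
by apply: eq_bigr => c _; rewrite /xi; case: par => /=; rewrite ?mulr1 ?mulr0 ?subr0 //; lra.
Qed.

Lemma rho_bound u v : u != v -> (\sum_c hh u c * hh v c) ^+ 2 <= 1 / 4.
Proof.
move=> uv.
have wz : bxor u v != bz n.
  apply: contra uv => /eqP h; apply/eqP/ffunP => q.
  have := congr1 (fun f : bits n => f q) h; rewrite /bxor /bz !ffunE.
  by case: (u q); case: (v q).
have /andP[h1 h2] := hG wz.
rewrite hh_inner sum_xi.
have H1 : (M%:R : R) <= (wt (bxor u v) G)%:R by rewrite ler_nat.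
have H2 : ((wt (bxor u v) G)%:R : R) <= 3 * M%:R by rewrite -natrM ler_nat.
have Hm : (m%:R : R) = 4 * M%:R by rewrite hm natrM.
have M0 : (0 : R) < M%:R by move: m_pos; rewrite Hm; lra.
rewrite Hm; set w := ((wt _ _)%:R : R).
have -> : (4 * M%:R - 2 * w) / (4 * M%:R) = (2 * M%:R - w) / (2 * M%:R).
  by field; lra.
rewrite expr_div_n ler_pdivrMr; last by apply: exprn_gt0; lra.
nra.
Qed.

Local Notation P x f := (\prod_l Fr phi (hh (x l)) (f l)).

Lemma FF_unit x : is_unit_vec (FF x).
Proof.
rewrite /is_unit_vec.
transitivity ((\sum_a Fr phi (hh x) a * Fr phi (hh x) a)%:C)%C.
  rewrite rmorph_sum; apply: eq_bigr => a _.
  by rewrite /FF !mxE rmorphM /= cr.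
by rewrite (Fr_norm phi_bij) hh_norm expr1n.
Qed.

Lemma accept_real k (Mr : {ffun 'I_k -> 'I_d} -> {ffun 'I_k -> 'I_d} -> R)
   (x : 'I_k -> bits n) :
  accept_prob (fun f g => (Mr f g)%:C)%C (tensor_state (fun l => FF (x l)))
  = (\sum_(f : {ffun 'I_k -> 'I_d}) \sum_(g : {ffun 'I_k -> 'I_d}) P x f * Mr f g * P x g)%:C%C.
Proof.
have hP : forall f : {ffun 'I_k -> 'I_d},
    \prod_(l < k) (FF (x l)) (f l) 0 = (P x f)%:C%C.
  move=> f; rewrite rmorph_prod; apply: eq_bigr => l _; by rewrite /FF mxE.
rewrite /accept_prob /qform /tensor_state rmorph_sum; apply: eq_bigr => f _.
rewrite rmorph_sum; apply: eq_bigr => g _.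
by rewrite !hP !rmorphM /= cr.
Qed.

Lemma tensor_norm k (x : 'I_k -> bits n) :
  \sum_(f : {ffun 'I_k -> 'I_d}) P x f * P x f = 1.
Proof.
under eq_bigr => f _ do rewrite -big_split /=.
rewrite -(bigA_distr_bigA (fun l a => Fr phi (hh (x l)) a * Fr phi (hh (x l)) a)) /=.
by apply: big1 => l _; rewrite (Fr_norm phi_bij) hh_norm expr1n.
Qed.

Lemma scal_acc k (c : R) (x : 'I_k -> bits n) :
  accept_prob (fun f g : {ffun 'I_k -> 'I_d} => ((f == g)%:R * c)%:C)%C
    (tensor_state (fun l => FF (x l))) = c%:C%C.
Proof.
rewrite accept_real; congr (_%:C)%C.
transitivity (\sum_(f : {ffun 'I_k -> 'I_d}) c * (P x f * P x f)); last by rewrite -big_distrr /= tensor_norm mulr1.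
apply: eq_bigr => f _.
transitivity (\sum_(g : {ffun 'I_k -> 'I_d}) (f == g)%:R * (c * (P x f * P x g))).
  by apply: eq_bigr => g _; ring.
by rewrite sum_deltal.
Qed.

Lemma bxor_inj (x y z : bits n) : (bxor x y == bxor x z) = (y == z).
Proof.
apply/eqP/eqP => [h|->] //; apply/ffunP => q.
have := congr1 (fun f : bits n => f q) h; rewrite /bxor !ffunE.
by case: (x q); case: (y q); case: (z q).
Qed.

Lemma JM_acc k (i j : 'I_k) (hij : i != j) (y z : bits n) (x : 'I_k -> bits n) :
  accept_prob (fun f g => (JM i j (Kr phi (xi y) (xi z)) f g)%:C)%C
    (tensor_state (fun l => FF (x l)))
  = ((((1 + (\sum_c hh (bxor (x i) y) c * hh (bxor (x j) z) c) ^+ 2) / 2) ^+ t)%:C)%C.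
Proof.
rewrite accept_real; congr (_%:C)%C.
rewrite (JM_qform hij (Kr phi (xi y) (xi z)) (v := fun l => Fr phi (hh (x l)))); last first.
  by move=> l; rewrite (Fr_norm phi_bij) hh_norm expr1n.
have e1 : \sum_c (hh (x i) c * xi y c) ^+ 2 = 1.
  by under eq_bigr => c _ do rewrite hh_xi expr2; exact: hh_norm.
have e2 : \sum_c (hh (x j) c * xi z c) ^+ 2 = 1.
  by under eq_bigr => c _ do rewrite hh_xi expr2; exact: hh_norm.
have e3 : \sum_c (hh (x i) c * xi y c) * (hh (x j) c * xi z c)
    = \sum_c hh (bxor (x i) y) c * hh (bxor (x j) z) c.
  by apply: eq_bigr => c _; rewrite !hh_xi.
by rewrite (Kr_form phi_bij) e1 e2 e3 mul1r.
Qed.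

Lemma cplx1 (a : R) : 1 - (a%:C)%C = ((1 - a)%:C)%C.
Proof. by rewrite rmorphB rmorph1. Qed.

Lemma construction (eps : R) : 0 <= eps -> ((5 / 8) ^+ t <= eps \/ 1 / 2 <= eps) ->
  (forall x, is_unit_vec (FF x)) /\
  forall k (i j : 'I_k) (y z : bits n),
    exists Mq : joint_basis k d -> joint_basis k d -> R[i],
      effect Mq /\
      forall x : 'I_k -> bits n,
        let psi := tensor_state (fun l => FF (x l)) in
        if MEQ x i j y z
        then 1 - (eps%:C)%C <= accept_prob Mq psi
        else accept_prob Mq psi <= (eps%:C)%C.
Proof.
move=> e0 he; split; first exact: FF_unit.
move=> k i j y z.
case: he => [he | he].
  have [eij | nij] := eqVneq i j.
    subst j.
    exists (fun f g : {ffun 'I_k -> 'I_d} => ((f == g)%:R * (y == z)%:R)%:C)%C; split.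
      by apply: scal_effect; case: (y == z) => /=; apply/andP; split; lra.
    move=> x /=; rewrite scal_acc /MEQ bxor_inj.
    case: (y == z) => /=; rewrite lecE /= ?subr0 ?eqxx /=; lra.
  exists (fun f g => (JM i j (Kr phi (xi y) (xi z)) f g)%:C)%C; split.
    apply: proj_effect.
      by apply: JM_sym => // a b a' b'; rewrite Kr_sym.
    apply: (JM_idem nij) => a b a' b'; apply: (Kr_idem phi_bij); exact: xi_sq.
  move=> x /=; rewrite JM_acc // /MEQ.
  have [uv | uv] := eqVneq (bxor (x i) y) (bxor (x j) z).
    rewrite uv hh_norm expr1n.
    have -> : (1 + 1) / 2 = 1 :> R by field.
    by rewrite expr1n lecE /= ?subr0 ?eqxx /=; lra.
  rewrite lecR; apply: preorder.Order.PreorderTheory.le_trans he; apply: lerXn2r.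
  - by rewrite nnegrE; apply: divr_ge0; [apply: addr_ge0; [lra | exact: sqr_ge0] | lra].
  - by rewrite nnegrE; lra.
  have := rho_bound uv; lra.
exists (fun f g : {ffun 'I_k -> 'I_d} => ((f == g)%:R * (1 / 2))%:C)%C; split.
  by apply: scal_effect; lra.
move=> x /=; rewrite scal_acc.
case: (MEQ x i j y z); rewrite lecE /= ?subr0 ?eqxx /=; lra.
Qed.

End Inst.

Lemma ln2_pos (R : realType) : (0 : R) < ln 2.
Proof. by apply: ln_gt0; rewrite ltr1n. Qed.

Lemma ln_pow2_le (R : realType) (a : nat) (x : R) : (2 ^ a)%:R <= x ->
  a%:R * ln (2 : R) <= ln x.
Proof.
move=> h.
have x0 : 0 < x by apply: lt_le_trans h; rewrite ltr0n expn_gt0.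
have p2 : (0 : R) < 2 ^+ a by apply: exprn_gt0; rewrite ltr0n.
have : ln ((2 : R) ^+ a) <= ln x by rewrite ler_ln ?posrE // -natrX.
by rewrite lnXn ?ltr0n // mulr_natl.
Qed.

Theorem lemma1 (R : realType) :
  exists C : R, 0 < C /\
  forall (n k : nat) (eps : R), (2 <= n)%N -> (2 <= k)%N -> 0 < eps < 1 ->
  exists s : nat,
    (s%:R <= C * ln (n%:R : R) * ln (1 / eps)) /\
    exists F : bits n -> 'cV[R[i]]_(2 ^ s),
      (forall x : bits n, is_unit_vec (F x)) /\
      forall (i j : 'I_k) (y z : bits n),
        exists M : joint_basis k (2 ^ s) -> joint_basis k (2 ^ s) -> R[i],
          effect M /\
          forall x : 'I_k -> bits n,
            let psi := tensor_state (fun l => F (x l)) in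
            if MEQ x i j y z
            then 1 - (eps%:C)%C <= accept_prob M psi
            else accept_prob M psi <= (eps%:C)%C.
Proof.
have l2 := ln2_pos R.
exists (20 / (ln (2 : R)) ^+ 2); split.
  by apply: divr_gt0 => //; apply: exprn_gt0.
move=> n k eps hn hk /andP[e0 e1].
set L := trunc_log 2 n.
have L1 : (0 < L)%N by rewrite /L trunc_log_gt0.
have hL : (2 ^ L <= n)%N by apply: trunc_logP => //; lia.
have hL2 : (n < 2 ^ L.+1)%N by apply: trunc_log_ltn.
set M := (2 ^ L.+2)%N.
have hm : (2 ^ L.+4 = 4 * M)%N by rewrite /M !expnS; lia.
have hM : (2 * n.+1 <= M)%N by move: hL2; rewrite /M !expnS; lia.
have [G0 HG0] := code_exists hM.
move: G0 HG0; rewrite -hm => G HG.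
have lnn : L%:R * ln (2 : R) <= ln (n%:R : R).
  by apply: ln_pow2_le; rewrite ler_nat.
have n1 : (1 : R) <= n%:R by rewrite ler1n; lia.
have inv1 : 1 <= 1 / eps by rewrite ler_pdivlMr // mul1r ltW.
have [he | he] := ltP eps (1 / 2).
  have hinv : 2 < 1 / eps by rewrite ltr_pdivlMr //; lra.
  set N := Num.truncn (1 / eps).
  have /andP[hN1 hN2] := truncn_itv (ltW (lt_le_trans ltr01 inv1)).
  rewrite -/N in hN1 hN2.
  set T := up_log 2 N.+1.
  have hT1 : (N.+1 <= 2 ^ T)%N by apply: up_logP.
  have hN : (1 < N.+1)%N.
    have : ((1%N)%:R : R) < N.+1%:R by rewrite mulr1n; lra.
    by rewrite ltr_nat.
  have hT2 : (2 ^ T.-1 < N.+1)%N by apply: up_log_gtn.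
  have T1 : (0 < T)%N by rewrite /T up_log_gt0.
  have B : (T.-1)%:R * ln (2 : R) <= ln (1 / eps).
    apply: ln_pow2_le; apply: le_trans hN1; rewrite ler_nat; lia.
  have Cc : ln (2 : R) <= ln (1 / eps).
    have h21 : ((2 ^ 1)%N%:R : R) <= 1 / eps by rewrite expn1; lra.
    have := ln_pow2_le h21; lra.
  have h58 : (5 / 8 : R) ^+ (2 * T) <= eps.
    rewrite exprM.
    apply: (@le_trans _ _ ((1 / 2) ^+ T)).
      apply: lerXn2r; rewrite ?nnegrE; try lra.
    have p2 : (0 : R) < 2 ^+ T by apply: exprn_gt0.
    rewrite expr_div_n expr1n ler_pdivrMr // .
    have : (N.+1%:R : R) <= 2 ^+ T by rewrite -natrX ler_nat.
    move=> h1; have : 1 < eps * N.+1%:R.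
      by move: hN2; rewrite ltr_pdivrMr // mulrC.
    have := ler_wpM2l (ltW e0) h1.
    lra.
  have [Hu Hq] := @construction R n L.+4 (2 * T) M G hm HG eps (ltW e0) (or_introl h58).
  exists (L.+4 * (2 * T))%N; split; last by exists (FF R (2 * T) G).
  have Tdef : (T%:R : R) = (T.-1)%:R + 1 by rewrite -{1}(prednK T1) -natr1.
  have L1r : (1 : R) <= L%:R by rewrite ler1n.
  set P := ln (n%:R : R) in lnn *; set Q := ln (1 / eps) in B Cc *; set u := ln (2 : R) in l2 lnn B Cc *.
  have X : (L.+4%:R : R) * u <= 5 * P.
    have h0 : 0 <= (L%:R - 1) * u by apply: mulr_ge0; lra.
    have -> : (L.+4%:R : R) * u = L%:R * u + 4 * u.
      by rewrite -[L.+4]addn4 natrD mulrDl.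
    move: h0; rewrite mulrBl mul1r; lra.
  have Y : 2 * T%:R * u <= 4 * Q.
    have -> : 2 * T%:R * u = 2 * (T.-1%:R * u) + 2 * u by rewrite Tdef; ring.
    lra.
  have Z : (L.+4%:R : R) * u * (2 * T%:R * u) <= 5 * P * (4 * Q).
    apply: ler_pM => //; [apply: mulr_ge0; [exact: ler0n | exact: ltW] |
                          apply: mulr_ge0; [apply: mulr_ge0; [lra | exact: ler0n] | exact: ltW]].
  have u2 : 0 < u ^+ 2 by apply: exprn_gt0.
  have un : u != 0 by apply: lt0r_neq0.
  have E : ((L.+4 * (2 * T))%N%:R : R) = ((L.+4%:R : R) * u * (2 * T%:R * u)) / u ^+ 2.
    rewrite natrM natrM; field; exact: un.
  have E2 : 20 / u ^+ 2 * P * Q = (5 * P * (4 * Q)) / u ^+ 2.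
    by field; exact: un.
  rewrite E E2; apply: ler_wpM2r => //; rewrite invr_ge0; exact: ltW.
have [Hu Hq] := @construction R n L.+4 0 M G hm HG eps (ltW e0) (or_intror he).
exists (L.+4 * 0)%N; split; last by exists (FF R 0 G).
rewrite muln0 mulr0n; apply: mulr_ge0; last exact: ln_ge0.
apply: mulr_ge0; last exact: ln_ge0.
by apply: divr_ge0; [lra | apply: exprn_ge0; exact: ltW].
Qed.
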